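(* Consider a one-site PTM cascade with $n\ge1$ layers. Fix all rate constants and all total amounts (all positive) except $\overline{S}_i$ for some $i\in\{1,\dots,n\}$. Then, as $\overline{S}_i$ increases, for each $j\in\{1,\dots,i\}$ the BMSS value of $S_j^1$ strictly increases if $i-j$ is even and strictly decreases if $i-j$ is odd.
   Context: A one-site PTM cascade with $n$ layers has species $E=S_0^1$ and, for $i=1,\dots,n$, $S_i^0,S_i^1,F_i,Y_i^0,Y_i^1$, with reactions $S_{i-1}^1+S_i^0 \rightleftharpoons Y_i^0 \to S_{i-1}^1+S_i^1$ (rate constants $a_i^0,b_i^0,c_i^0$) and $F_i+S_i^1\rightleftharpoons Y_i^1\to F_i+S_i^0$ (rate constants $a_i^1,b_i^1,c_i^1$), all positive, mass-action kinetics. Put $\delta_i=a_i^1/(b_i^1+c_i^1)$, $\gamma_i=(c_i^1/c_i^0)\delta_i$, $\lambda_i=\frac{b_i^0+c_i^0}{a_i^0}\gamma_i$. Given total amounts $\overline{E},\overline{F}_i,\overline{S}_i$, a steady state is a real solution of: $Y_i^0=\gamma_iF_iS_i^1$, $Y_i^1=\delta_iF_iS_i^1$, $\lambda_iF_iS_i^1=S_i^0S_{i-1}^1$, $\overline{F}_i=F_i+Y_i^1$, $\overline{S}_i=S_i^0+S_i^1+Y_i^0+Y_i^1+Y_{i+1}^0$ ($i=1,\dots,n$, $Y_{n+1}^0:=0$), $\overline{E}=E+Y_1^0$. A BMSS is a steady state with positive total amounts and all concentrations nonnegative; for positive total amounts it exists and is unique. *)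

(* Defs.v *)
From Stdlib Require Import Reals Lra Arith.
Open Scope R_scope.

(* Layers are indexed by i = 1..n; rate constants a_i^0 etc. and total
   amounts are functions nat -> R (only indices 1..n matter).
   Concentrations: S0 i = S_i^0, S1 i = S_i^1 (with S1 0 = E = S_0^1),
   F i = F_i, Y0 i = Y_i^0, Y1 i = Y_i^1. *)

Definition delta (a1 b1 c1 : nat -> R) (i : nat) : R := a1 i / (b1 i + c1 i).
Definition gamma (c0 a1 b1 c1 : nat -> R) (i : nat) : R :=
  (c1 i / c0 i) * delta a1 b1 c1 i.
Definition lambda (a0 b0 c0 a1 b1 c1 : nat -> R) (i : nat) : R :=
  ((b0 i + c0 i) / a0 i) * gamma c0 a1 b1 c1 i.

(* Y_{i+1}^0 with the convention Y_{n+1}^0 := 0 *)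
Definition Ynext (n : nat) (Y0 : nat -> R) (i : nat) : R :=
  if Nat.ltb i n then Y0 (S i) else 0.

Definition steady_state (n : nat) (a0 b0 c0 a1 b1 c1 : nat -> R)
  (Ebar : R) (Fbar Sbar : nat -> R)
  (S0 S1 F Y0 Y1 : nat -> R) : Prop :=
  (forall i, (1 <= i <= n)%nat ->
     Y0 i = gamma c0 a1 b1 c1 i * F i * S1 i /\
     Y1 i = delta a1 b1 c1 i * F i * S1 i /\
     lambda a0 b0 c0 a1 b1 c1 i * F i * S1 i = S0 i * S1 (i - 1)%nat /\
     Fbar i = F i + Y1 i /\
     Sbar i = S0 i + S1 i + Y0 i + Y1 i + Ynext n Y0 i) /\
  Ebar = S1 0%nat + Y0 1%nat.

Definition is_BMSS (n : nat) (a0 b0 c0 a1 b1 c1 : nat -> R)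
  (Ebar : R) (Fbar Sbar : nat -> R)
  (S0 S1 F Y0 Y1 : nat -> R) : Prop :=
  0 < Ebar /\
  (forall i, (1 <= i <= n)%nat -> 0 < Fbar i /\ 0 < Sbar i) /\
  steady_state n a0 b0 c0 a1 b1 c1 Ebar Fbar Sbar S0 S1 F Y0 Y1 /\
  0 <= S1 0%nat /\
  (forall i, (1 <= i <= n)%nat ->
     0 <= S0 i /\ 0 <= S1 i /\ 0 <= F i /\ 0 <= Y0 i /\ 0 <= Y1 i).

(* Main.v *)
Require Import Defs.
From Stdlib Require Import Reals Lra Lia Psatz Arith.
Open Scope R_scope.

Definition SD (a a' b b' : R) := (a<=a' -> b<=b') /\ (a<a' -> b<b') /\ (a'<=a -> b'<=b) /\ (a'<a -> b'<b).
Definition OD (a a' b b' : R) := (a<=a' -> b'<=b) /\ (a<a' -> b'<b) /\ (a'<=a -> b<=b') /\ (a'<a -> b<b').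
Definition WSD (b b' y y' : R) := (b<=b' -> y<=y') /\ (b'<=b -> y'<=y).

Lemma OD_sym a a' b b' : OD a a' b b' -> OD b b' a a'.
Proof.
  unfold OD; intros (H1&H2&H3&H4); repeat split; intros H.
  - destruct (Rle_lt_dec a' a); auto. specialize (H2 r). lra.
  - destruct (Rlt_le_dec a' a); auto. specialize (H1 r). lra.
  - destruct (Rle_lt_dec a a'); auto. specialize (H4 r). lra.
  - destruct (Rlt_le_dec a a'); auto. specialize (H3 r). lra.
Qed.

Lemma SD_WSD b b' q q' g : 0 < g -> SD b b' q q' -> WSD b b' (g*q) (g*q').
Proof.
  unfold SD, WSD; intros Hg (H1&H2&H3&H4); split; intros H.
  - specialize (H1 H); nra.
  - specialize (H3 H); nra.
Qed.

Lemma phi_mono_half Fb d x x' F F' : 0<Fb -> 0<=d -> 0<=x -> 0<=x' ->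
  Fb = F + d*F*x -> Fb = F' + d*F'*x' ->
  (x<=x' -> F*x <= F'*x') /\ (x<x' -> F*x < F'*x').
Proof.
  intros HFb Hd Hx Hx' E1 E2.
  assert (E: (F'*x' - F*x)*((1+d*x)*(1+d*x')) = Fb*(x'-x)).
  { assert (E3: (F'*x' - F*x)*((1+d*x)*(1+d*x')) = (F'*(1+d*x'))*x'*(1+d*x) - (F*(1+d*x))*x*(1+d*x')) by ring.
    rewrite E3. replace (F'*(1+d*x')) with Fb by lra. replace (F*(1+d*x)) with Fb by lra. ring. }
  assert (Hpos: 0 < (1+d*x)*(1+d*x')) by (apply Rmult_lt_0_compat; nra).
  split; intros H.
  - assert (0 <= F'*x' - F*x); [|lra].
    destruct (Rle_lt_dec 0 (F'*x' - F*x)); auto. nra.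
  - assert (0 < F'*x' - F*x); [|lra].
    destruct (Rlt_le_dec 0 (F'*x' - F*x)); auto. nra.
Qed.

Lemma phi_mono Fb d x x' F F' : 0<Fb -> 0<=d -> 0<=x -> 0<=x' ->
  Fb = F + d*F*x -> Fb = F' + d*F'*x' -> SD x x' (F*x) (F'*x').
Proof.
  intros. destruct (phi_mono_half Fb d x x' F F'); auto.
  destruct (phi_mono_half Fb d x' x F' F); auto. unfold SD; tauto.
Qed.

Lemma s_le l a a' p p' s s' : 0<l -> 0<a -> 0<a' -> 0<=p -> s*a = l*p -> s'*a' = l*p' -> p<=p' -> a'<=a -> s<=s'.
Proof.
  intros. assert (0 <= s') by nra.
  assert (s*a <= s'*a) by nra. nra.
Qed.

Lemma s_lt l a a' p p' s s' : 0<l -> 0<a -> 0<a' -> 0<=p -> s*a = l*p -> s'*a' = l*p' ->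
  ((p<p' /\ a'<=a) \/ (p<=p' /\ a'<a /\ 0<p)) -> s<s'.
Proof.
  intros Hl Ha Ha' Hp E E' [[H1 H2]|[H1 [H2 H3]]].
  - assert (0 <= s') by nra. assert (s*a < s'*a) by nra. nra.
  - assert (0 < s') by nra. assert (s*a < s'*a) by nra. nra.
Qed.

Lemma bottom_half T l c a a' b b' p p' s s' y y' : 0<l -> 0<=c -> 0<a -> 0<a' -> 0<p -> 0<p' ->
  T = s + b + c*p + y -> T = s' + b' + c*p' + y' -> s*a = l*p -> s'*a' = l*p' ->
  SD b b' p p' -> WSD b b' y y' -> (a<=a' -> b<=b') /\ (a<a' -> b<b').
Proof.
  intros Hl Hc Ha Ha' Hp Hp' E1 E2 S1 S2 (P1&P2&P3&P4) (W1&W2); split; intros H.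
  - destruct (Rle_lt_dec b b'); auto. exfalso.
    assert (p' < p) by auto. assert (y' <= y) by (apply W2; lra).
    assert (s' <= s) by (apply (s_le l a' a p' p s' s); auto; lra). nra.
  - destruct (Rlt_le_dec b b'); auto. exfalso.
    assert (p' <= p) by auto. assert (y' <= y) by auto.
    assert (s' < s) by (apply (s_lt l a' a p' p s' s); auto; lra). nra.
Qed.

Lemma SD_swap a a' b b' : SD a a' b b' -> SD a' a b' b.
Proof. unfold SD; tauto. Qed.
Lemma WSD_swap a a' b b' : WSD a a' b b' -> WSD a' a b' b.
Proof. unfold WSD; tauto. Qed.
Lemma OD_swap a a' b b' : OD a a' b b' -> OD a' a b' b.
Proof. unfold OD; tauto. Qed.

Lemma bottom T l c a a' b b' p p' s s' y y' : 0<l -> 0<=c -> 0<a -> 0<a' -> 0<p -> 0<p' ->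
  T = s + b + c*p + y -> T = s' + b' + c*p' + y' -> s*a = l*p -> s'*a' = l*p' ->
  SD b b' p p' -> WSD b b' y y' -> SD a a' b b'.
Proof.
  intros. destruct (bottom_half T l c a a' b b' p p' s s' y y'); auto.
  destruct (bottom_half T l c a' a b' b p' p s' s y' y); auto using SD_swap, WSD_swap.
  unfold SD; tauto.
Qed.

Lemma top_half T l c a a' b b' p p' s s' y y' : 0<l -> 0<=c -> 0<a -> 0<a' -> 0<p -> 0<p' ->
  T = s + b + c*p + y -> T = s' + b' + c*p' + y' -> s*a = l*p -> s'*a' = l*p' ->
  OD a a' b b' -> SD b b' p p' -> (b<=b' -> y'<=y) /\ (b<b' -> y'<y).
Proof.
  intros Hl Hc Ha Ha' Hp Hp' E1 E2 S1 S2 HO (P1&P2&P3&P4).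
  destruct (OD_sym _ _ _ _ HO) as (O1&O2&O3&O4). split; intros H.
  - assert (p <= p') by auto. assert (a' <= a) by auto.
    assert (s <= s') by (apply (s_le l a a' p p' s s'); auto; lra). nra.
  - assert (p < p') by auto. assert (a' < a) by auto.
    assert (s < s') by (apply (s_lt l a a' p p' s s'); auto; lra). nra.
Qed.

Lemma top T l c a a' b b' p p' s s' g z z' q q' : 0<l -> 0<=c -> 0<a -> 0<a' -> 0<p -> 0<p' -> 0<g ->
  T = s + b + c*p + g*q -> T = s' + b' + c*p' + g*q' -> s*a = l*p -> s'*a' = l*p' ->
  OD a a' b b' -> SD b b' p p' -> SD z z' q q' -> OD b b' z z'.
Proof.
  intros. destruct (top_half T l c a a' b b' p p' s s' (g*q) (g*q')) as [A1 A2]; auto.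
  destruct (top_half T l c a' a b' b p' p s' s (g*q') (g*q)) as [B1 B2]; auto using SD_swap, OD_swap.
  match goal with Hz: SD z z' q q' |- _ => destruct Hz as (Z1&Z2&Z3&Z4) end.
  unfold OD; repeat split; intros HH.
  - destruct (Rle_lt_dec z' z); auto. specialize (A1 HH). specialize (Z2 r). nra.
  - destruct (Rlt_le_dec z' z); auto. specialize (A2 HH). specialize (Z1 r). nra.
  - destruct (Rle_lt_dec z z'); auto. specialize (B1 HH). specialize (Z4 r). nra.
  - destruct (Rlt_le_dec z z'); auto. specialize (B2 HH). specialize (Z3 r). nra.
Qed.

Lemma middle T T' l c a a' b b' p p' s s' y y' : 0<l -> 0<=c -> 0<a -> 0<a' -> 0<p -> 0<p' ->
  T = s + b + c*p + y -> T' = s' + b' + c*p' + y' -> s*a = l*p -> s'*a' = l*p' -> T < T' ->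
  OD a a' b b' -> SD b b' p p' -> WSD b b' y y' -> b < b'.
Proof.
  intros Hl Hc Ha Ha' Hp Hp' E1 E2 S1 S2 HT HO (P1&P2&P3&P4) (W1&W2).
  destruct (OD_sym _ _ _ _ HO) as (O1&O2&O3&O4).
  destruct (Rlt_le_dec b b'); auto. exfalso.
  assert (p' <= p) by auto. assert (a <= a') by auto. assert (y' <= y) by auto.
  assert (s' <= s) by (apply (s_le l a' a p' p s' s); auto; lra). nra.
Qed.

Lemma layer0 E x0 x0' x1 x1' g q q' : 0<g -> E = x0 + g*q -> E = x0' + g*q' -> SD x1 x1' q q' -> OD x0 x0' x1 x1'.
Proof.
  intros Hg E1 E2 (Z1&Z2&Z3&Z4). unfold OD; repeat split; intros H.
  - destruct (Rle_lt_dec x1' x1); auto. specialize (Z2 r). nra.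
  - destruct (Rlt_le_dec x1' x1); auto. specialize (Z1 r). nra.
  - destruct (Rle_lt_dec x1 x1'); auto. specialize (Z4 r). nra.
  - destruct (Rlt_le_dec x1 x1'); auto. specialize (Z3 r). nra.
Qed.

Definition RatesPos (n : nat) (a0 b0 c0 a1 b1 c1 : nat -> R) :=
  forall k, (1 <= k <= n)%nat ->
       0 < a0 k /\ 0 < b0 k /\ 0 < c0 k /\ 0 < a1 k /\ 0 < b1 k /\ 0 < c1 k.

Lemma rates_pos n a0 b0 c0 a1 b1 c1 k : RatesPos n a0 b0 c0 a1 b1 c1 -> (1 <= k <= n)%nat ->
  0 < delta a1 b1 c1 k /\ 0 < gamma c0 a1 b1 c1 k /\ 0 < lambda a0 b0 c0 a1 b1 c1 k.
Proof.
  intros HR Hk. destruct (HR k Hk) as (?&?&?&?&?&?).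
  unfold lambda, gamma, delta.
  assert (0 < a1 k / (b1 k + c1 k)) by (apply Rdiv_lt_0_compat; lra).
  assert (0 < c1 k / c0 k) by (apply Rdiv_lt_0_compat; lra).
  assert (0 < (b0 k + c0 k) / a0 k) by (apply Rdiv_lt_0_compat; lra).
  repeat split; auto; apply Rmult_lt_0_compat; auto; apply Rmult_lt_0_compat; auto.
Qed.

Lemma F_pos n a0 b0 c0 a1 b1 c1 Ebar Fbar Sbar S0 S1 F Y0 Y1 k :
  RatesPos n a0 b0 c0 a1 b1 c1 ->
  is_BMSS n a0 b0 c0 a1 b1 c1 Ebar Fbar Sbar S0 S1 F Y0 Y1 -> (1 <= k <= n)%nat -> 0 < F k.
Proof.
  intros HR (HE & HT & (HS & HS0) & H0 & Hnn) Hk.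
  destruct (rates_pos _ _ _ _ _ _ _ k HR Hk) as (Hd&Hg&Hl).
  destruct (HS k Hk) as (E1&E2&E3&E4&E5). destruct (Hnn k Hk) as (?&?&?&?&?).
  destruct (HT k Hk). destruct (Rle_lt_or_eq_dec 0 (F k)); auto.
  rewrite <- e in E2. rewrite E2 in E4. rewrite <- e in E4. lra.
Qed.

Lemma down n a0 b0 c0 a1 b1 c1 Ebar Fbar Sbar S0 S1 F Y0 Y1 m :
  RatesPos n a0 b0 c0 a1 b1 c1 ->
  is_BMSS n a0 b0 c0 a1 b1 c1 Ebar Fbar Sbar S0 S1 F Y0 Y1 -> (S m <= n)%nat ->
  S1 m = 0 -> S1 (S m) = 0.
Proof.
  intros HR HB Hm H0.
  assert (Hk: (1 <= S m <= n)%nat) by lia.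
  pose proof (F_pos _ _ _ _ _ _ _ _ _ _ _ _ _ _ _ _ HR HB Hk).
  destruct HB as (HE & HT & (HS & HS0) & H00 & Hnn).
  destruct (rates_pos _ _ _ _ _ _ _ (S m) HR Hk) as (Hd&Hg&Hl).
  destruct (HS (S m) Hk) as (E1&E2&E3&E4&E5).
  replace (S m - 1)%nat with m in E3 by lia. rewrite H0 in E3.
  assert (lambda a0 b0 c0 a1 b1 c1 (S m) * F (S m) * S1 (S m) = 0) by lra.
  apply Rmult_integral in H1. destruct H1; auto. nra.
Qed.

Lemma up n a0 b0 c0 a1 b1 c1 Ebar Fbar Sbar S0 S1 F Y0 Y1 m :
  RatesPos n a0 b0 c0 a1 b1 c1 ->
  is_BMSS n a0 b0 c0 a1 b1 c1 Ebar Fbar Sbar S0 S1 F Y0 Y1 -> (S m <= n)%nat ->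
  S1 (S m) = 0 -> S1 m = 0.
Proof.
  intros HR HB Hm H0.
  assert (Hk: (1 <= S m <= n)%nat) by lia.
  assert (HY: Ynext n Y0 (S m) = 0).
  { unfold Ynext. destruct (Nat.ltb_spec (S m) n); auto.
    pose proof (down _ _ _ _ _ _ _ _ _ _ _ _ _ _ _ _ HR HB H H0).
    destruct HB as (HE & HT & (HS & HS0) & H00 & Hnn).
    assert (Hk2: (1 <= S (S m) <= n)%nat) by lia.
    destruct (HS _ Hk2) as (E1&_). rewrite E1, H1. ring. }
  destruct HB as (HE & HT & (HS & HS0) & H00 & Hnn).
  destruct (HS (S m) Hk) as (E1&E2&E3&E4&E5). destruct (HT _ Hk).
  replace (S m - 1)%nat with m in E3 by lia. rewrite H0 in E1, E2, E3, E5.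
  rewrite HY in E5. rewrite E1, E2 in E5.
  assert (S0 (S m) * S1 m = 0) by lra.
  apply Rmult_integral in H2. destruct H2; auto. exfalso. rewrite H2 in E5. lra.
Qed.

Lemma S1_pos n a0 b0 c0 a1 b1 c1 Ebar Fbar Sbar S0 S1 F Y0 Y1 k :
  (1 <= n)%nat -> RatesPos n a0 b0 c0 a1 b1 c1 ->
  is_BMSS n a0 b0 c0 a1 b1 c1 Ebar Fbar Sbar S0 S1 F Y0 Y1 -> (k <= n)%nat -> 0 < S1 k.
Proof.
  intros Hn HR HB Hk.
  assert (Hnn0: 0 <= S1 k).
  { destruct (Nat.eq_dec k 0) as [Hk0|Hk0]. { rewrite Hk0. destruct HB as (_&_&_&Hz&_); exact Hz. } destruct HB as (_&_&_&_&Hnn). apply (Hnn k); lia. }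
  destruct (Rle_lt_or_eq_dec 0 (S1 k) Hnn0); auto. exfalso.
  assert (H0: forall m, (m <= k)%nat -> S1 (k - m)%nat = 0).
  { induction m; intros. replace (k-0)%nat with k by lia. auto.
    apply (up _ _ _ _ _ _ _ _ _ _ _ _ _ _ _ _ HR HB). lia.
    replace (S (k - S m)) with (k - m)%nat by lia. apply IHm; lia. }
  specialize (H0 k (le_n _)). replace (k-k)%nat with 0%nat in H0 by lia.
  pose proof (down _ _ _ _ _ _ _ _ _ _ _ _ _ _ _ 0%nat HR HB Hn H0).
  destruct HB as (HE & HT & (HS & HS0) & H00 & Hnn).
  assert (Hk1 : (1 <= 1 <= n)%nat) by lia.
  destruct (HS 1%nat Hk1) as (E1&_). rewrite H0, E1, H in HS0. lra.
Qed.

Lemma layer_facts n a0 b0 c0 a1 b1 c1 Ebar Fbar Sbar S0 S1 F Y0 Y1 k :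
  (1 <= n)%nat -> RatesPos n a0 b0 c0 a1 b1 c1 ->
  is_BMSS n a0 b0 c0 a1 b1 c1 Ebar Fbar Sbar S0 S1 F Y0 Y1 -> (1 <= k <= n)%nat ->
  Sbar k = S0 k + S1 k + (gamma c0 a1 b1 c1 k + delta a1 b1 c1 k)*(F k*S1 k) + Ynext n Y0 k /\
  S0 k * S1 (k-1)%nat = lambda a0 b0 c0 a1 b1 c1 k * (F k * S1 k) /\
  Fbar k = F k + delta a1 b1 c1 k * F k * S1 k /\ 0 < F k * S1 k /\ 0 < S1 (k-1)%nat /\
  0 < Fbar k /\ 0 <= F k /\ 0 <= S1 k.
Proof.
  intros Hn HR HB Hk.
  pose proof (F_pos _ _ _ _ _ _ _ _ _ _ _ _ _ _ _ _ HR HB Hk).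
  pose proof (S1_pos _ _ _ _ _ _ _ _ _ _ _ _ _ _ _ k Hn HR HB ltac:(lia)).
  pose proof (S1_pos _ _ _ _ _ _ _ _ _ _ _ _ _ _ _ (k-1)%nat Hn HR HB ltac:(lia)).
  destruct HB as (HE & HT & (HS & HS0) & H00 & Hnn).
  destruct (HS k Hk) as (E1&E2&E3&E4&E5). destruct (HT k Hk).
  assert (Sbar k = S0 k + S1 k + (gamma c0 a1 b1 c1 k + delta a1 b1 c1 k)*(F k*S1 k) + Ynext n Y0 k) by (rewrite E5, E1, E2; ring).
  assert (S0 k * S1 (k-1)%nat = lambda a0 b0 c0 a1 b1 c1 k * (F k * S1 k)) by (rewrite <- E3; ring).
  assert (0 < F k * S1 k) by (apply Rmult_lt_0_compat; auto).
  destruct (Hnn k Hk) as (?&?&?&?&?).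
  repeat split; auto; lra.
Qed.

Lemma ynext_lt n a0 b0 c0 a1 b1 c1 Ebar Fbar Sbar S0 S1 F Y0 Y1 k :
  is_BMSS n a0 b0 c0 a1 b1 c1 Ebar Fbar Sbar S0 S1 F Y0 Y1 -> (1 <= k)%nat -> (k < n)%nat ->
  Ynext n Y0 k = gamma c0 a1 b1 c1 (S k) * (F (S k) * S1 (S k)).
Proof.
  intros HB Hk1 Hkn. unfold Ynext. destruct (Nat.ltb_spec k n); try lia.
  destruct HB as (HE & HT & (HS & HS0) & H00 & Hnn).
  destruct (HS (S k) ltac:(lia)) as (E1&_). rewrite E1. ring.
Qed.

Lemma ynext_n n Y0 : Ynext n Y0 n = 0.
Proof. unfold Ynext. destruct (Nat.ltb_spec n n); auto; lia. Qed.

Lemma SDp n a0 b0 c0 a1 b1 c1 Ebar Ebar' Fbar Sbar Sbar' S0 S1 F Y0 Y1 S0' S1' F' Y0' Y1' k :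
  (1 <= n)%nat -> RatesPos n a0 b0 c0 a1 b1 c1 ->
  is_BMSS n a0 b0 c0 a1 b1 c1 Ebar Fbar Sbar S0 S1 F Y0 Y1 ->
  is_BMSS n a0 b0 c0 a1 b1 c1 Ebar' Fbar Sbar' S0' S1' F' Y0' Y1' -> (1 <= k <= n)%nat ->
  SD (S1 k) (S1' k) (F k * S1 k) (F' k * S1' k).
Proof.
  intros Hn HR HB HB' Hk.
  destruct (layer_facts _ _ _ _ _ _ _ _ _ _ _ _ _ _ _ k Hn HR HB Hk) as (_&_&A&_&_&B&_&C).
  destruct (layer_facts _ _ _ _ _ _ _ _ _ _ _ _ _ _ _ k Hn HR HB' Hk) as (_&_&A'&_&_&_&_&C').
  destruct (rates_pos _ _ _ _ _ _ _ k HR Hk) as (Hd&_).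
  apply (phi_mono (Fbar k) (delta a1 b1 c1 k)); auto; lra.
Qed.

Lemma SD_trans_helper a a' b b' c c' : SD a a' b b' -> SD b b' c c' -> SD a a' c c'.
Proof. unfold SD; intuition. Qed.

Theorem mainTheorem8 :
  forall (n : nat) (a0 b0 c0 a1 b1 c1 : nat -> R) (Ebar : R)
         (Fbar Sbar Sbar' : nat -> R) (i : nat),
    (1 <= n)%nat ->
    (forall k, (1 <= k <= n)%nat ->
       0 < a0 k /\ 0 < b0 k /\ 0 < c0 k /\ 0 < a1 k /\ 0 < b1 k /\ 0 < c1 k) ->
    0 < Ebar ->
    (forall k, (1 <= k <= n)%nat -> 0 < Fbar k /\ 0 < Sbar k /\ 0 < Sbar' k) ->
    (1 <= i <= n)%nat ->
    (forall k, (1 <= k <= n)%nat -> k <> i -> Sbar' k = Sbar k) ->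
    Sbar i < Sbar' i ->
    forall (S0 S1 F Y0 Y1 S0' S1' F' Y0' Y1' : nat -> R),
      is_BMSS n a0 b0 c0 a1 b1 c1 Ebar Fbar Sbar S0 S1 F Y0 Y1 ->
      is_BMSS n a0 b0 c0 a1 b1 c1 Ebar Fbar Sbar' S0' S1' F' Y0' Y1' ->
      forall j, (1 <= j <= i)%nat ->
        (Nat.Even (i - j) -> S1 j < S1' j) /\
        (Nat.Odd (i - j) -> S1' j < S1 j).
Proof.
  intros n a0 b0 c0 a1 b1 c1 Ebar Fbar Sbar Sbar' i Hn HR0 HE HT Hi Heq Hlt
    S0 S1 F Y0 Y1 S0' S1' F' Y0' Y1' HB HB'.
  assert (HR : RatesPos n a0 b0 c0 a1 b1 c1) by exact HR0.
  assert (LF := fun k Hk => layer_facts _ _ _ _ _ _ _ _ _ _ _ _ _ _ _ k Hn HR HB Hk).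
  assert (LF' := fun k Hk => layer_facts _ _ _ _ _ _ _ _ _ _ _ _ _ _ _ k Hn HR HB' Hk).
  assert (SP := fun k Hk => SDp _ _ _ _ _ _ _ _ _ _ _ _ _ _ _ _ _ _ _ _ _ _ k Hn HR HB HB' Hk).
  assert (Htop: forall k, (1 <= k <= i)%nat -> OD (S1 (k-1)%nat) (S1' (k-1)%nat) (S1 k) (S1' k)).
  { induction k as [|k IH]; intros Hk; [lia|].
    destruct (Nat.eq_dec k 0) as [->|Hk0].
    - simpl. assert (H1: (1 <= 1 <= n)%nat) by lia.
      destruct (rates_pos _ _ _ _ _ _ _ 1 HR H1) as (_&Hg&_).
      apply (layer0 Ebar _ _ _ _ (gamma c0 a1 b1 c1 1) (F 1%nat * S1 1%nat) (F' 1%nat * S1' 1%nat)); auto.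
      + pose proof HB as HBc. destruct HBc as (_&_&(HS&E)&_). rewrite E.
        destruct (HS 1%nat H1) as (E1&_). rewrite E1. ring.
      + pose proof HB' as HBc. destruct HBc as (_&_&(HS&E)&_). rewrite E.
        destruct (HS 1%nat H1) as (E1&_). rewrite E1. ring.
    - assert (Hk': (1 <= k <= n)%nat) by lia.
      specialize (IH ltac:(lia)).
      destruct (LF k Hk') as (A1&A2&_&A4&A5&_).
      destruct (LF' k Hk') as (B1&B2&_&B4&B5&_).
      destruct (rates_pos _ _ _ _ _ _ _ (S k) HR ltac:(lia)) as (_&Hg&_).
      destruct (rates_pos _ _ _ _ _ _ _ k HR Hk') as (Hd&Hg'&Hl).
      rewrite (@ynext_lt _ _ _ _ _ _ _ _ _ _ _ _ _ _ _ k HB ltac:(lia) ltac:(lia)) in A1.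
      rewrite (@ynext_lt _ _ _ _ _ _ _ _ _ _ _ _ _ _ _ k HB' ltac:(lia) ltac:(lia)) in B1.
      rewrite (Heq k Hk' ltac:(lia)) in B1.
      replace (S k - 1)%nat with k by lia.
      apply (top (Sbar k) (lambda a0 b0 c0 a1 b1 c1 k) (gamma c0 a1 b1 c1 k + delta a1 b1 c1 k) (S1 (k-1)%nat) (S1' (k-1)%nat) (S1 k) (S1' k) (F k * S1 k) (F' k * S1' k) (S0 k) (S0' k) (gamma c0 a1 b1 c1 (S k)) (S1 (S k)) (S1' (S k)) (F (S k) * S1 (S k)) (F' (S k) * S1' (S k))); auto; try lra.
      all: try (apply SP); try lia. }
  assert (Hbot: forall m k, k = (n - m)%nat -> (i < k)%nat -> SD (S1 (k-1)%nat) (S1' (k-1)%nat) (S1 k) (S1' k)).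
  { induction m as [|m IH]; intros k Hkm Hik.
    - assert (Hk': (1 <= k <= n)%nat) by lia.
      destruct (LF k Hk') as (A1&A2&_&A4&A5&_).
      destruct (LF' k Hk') as (B1&B2&_&B4&B5&_).
      destruct (rates_pos _ _ _ _ _ _ _ k HR Hk') as (Hd&Hg'&Hl).
      replace k with n in A1, B1 by lia. rewrite ynext_n in A1, B1. replace n with k in A1, B1 by lia.
      rewrite (Heq k Hk' ltac:(lia)) in B1.
      apply (bottom (Sbar k) (lambda a0 b0 c0 a1 b1 c1 k) (gamma c0 a1 b1 c1 k + delta a1 b1 c1 k) (S1 (k-1)%nat) (S1' (k-1)%nat) (S1 k) (S1' k) (F k * S1 k) (F' k * S1' k) (S0 k) (S0' k) 0 0); auto; try lra.
      all: try (apply SP; lia); unfold WSD; lra.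
    - destruct (Nat.le_gt_cases n m) as [Hnm|Hnm]; [lia|].
      assert (Hk': (1 <= k <= n)%nat) by lia.
      specialize (IH (S k) ltac:(lia) ltac:(lia)). replace (S k - 1)%nat with k in IH by lia.
      destruct (LF k Hk') as (A1&A2&_&A4&A5&_).
      destruct (LF' k Hk') as (B1&B2&_&B4&B5&_).
      destruct (rates_pos _ _ _ _ _ _ _ k HR Hk') as (Hd&Hg'&Hl).
      destruct (rates_pos _ _ _ _ _ _ _ (S k) HR ltac:(lia)) as (_&Hg&_).
      rewrite (@ynext_lt _ _ _ _ _ _ _ _ _ _ _ _ _ _ _ k HB ltac:(lia) ltac:(lia)) in A1.
      rewrite (@ynext_lt _ _ _ _ _ _ _ _ _ _ _ _ _ _ _ k HB' ltac:(lia) ltac:(lia)) in B1.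
      rewrite (Heq k Hk' ltac:(lia)) in B1.
      apply (bottom (Sbar k) (lambda a0 b0 c0 a1 b1 c1 k) (gamma c0 a1 b1 c1 k + delta a1 b1 c1 k) (S1 (k-1)%nat) (S1' (k-1)%nat) (S1 k) (S1' k) (F k * S1 k) (F' k * S1' k) (S0 k) (S0' k) (gamma c0 a1 b1 c1 (S k) * (F (S k) * S1 (S k))) (gamma c0 a1 b1 c1 (S k) * (F' (S k) * S1' (S k)))); auto; try lra.
      all: try (apply SP; lia).
      apply SD_WSD; auto. apply (SD_trans_helper _ _ _ _ _ _ IH (SP (S k) ltac:(lia))). }
  assert (Hmid: S1 i < S1' i).
  { assert (Hk': (1 <= i <= n)%nat) by lia.
    destruct (LF i Hk') as (A1&A2&_&A4&A5&_).
    destruct (LF' i Hk') as (B1&B2&_&B4&B5&_).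
    destruct (rates_pos _ _ _ _ _ _ _ i HR Hk') as (Hd&Hg'&Hl).
    apply (middle (Sbar i) (Sbar' i) (lambda a0 b0 c0 a1 b1 c1 i) (gamma c0 a1 b1 c1 i + delta a1 b1 c1 i) (S1 (i-1)%nat) (S1' (i-1)%nat) (S1 i) (S1' i) (F i * S1 i) (F' i * S1' i) (S0 i) (S0' i) (Ynext n Y0 i) (Ynext n Y0' i)); auto; try lra.
    all: try (apply SP; lia). all: try (apply Htop; lia).
    destruct (Nat.eq_dec i n) as [Hin|Hin].
      + rewrite Hin, !ynext_n. unfold WSD; lra.
      + rewrite (@ynext_lt _ _ _ _ _ _ _ _ _ _ _ _ _ _ _ i HB ltac:(lia) ltac:(lia)).
        rewrite (@ynext_lt _ _ _ _ _ _ _ _ _ _ _ _ _ _ _ i HB' ltac:(lia) ltac:(lia)).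
        destruct (rates_pos _ _ _ _ _ _ _ (S i) HR ltac:(lia)) as (_&Hg&_).
        apply SD_WSD; auto.
        pose proof (Hbot (n - S i)%nat (S i) ltac:(lia) ltac:(lia)) as HH.
        replace (S i - 1)%nat with i in HH by lia.
        apply (SD_trans_helper _ _ _ _ _ _ HH (SP (S i) ltac:(lia))). }
  assert (Hfin: forall m j, (j + m = i)%nat -> (1 <= j)%nat ->
            (Nat.Even m -> S1 j < S1' j) /\ (Nat.Odd m -> S1' j < S1 j)).
  { induction m as [|m IH]; intros j Hjm Hj.
    - replace j with i by lia. split; intros H; auto.
      destruct H as [q Hq]; lia.
    - specialize (IH (S j) ltac:(lia) ltac:(lia)).
      pose proof (OD_sym _ _ _ _ (Htop (S j) ltac:(lia))) as HO.
      replace (S j - 1)%nat with j in HO by lia.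
      destruct HO as (O1&O2&O3&O4). destruct IH as [I1 I2].
      rewrite Nat.Even_succ, Nat.Odd_succ. split; intros H.
      + apply O4. apply I2; auto.
      + apply O2. apply I1; auto. }
  intros j Hj. apply Hfin; lia.
Qed.
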